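(* Let $G=(V,E)$ be a $K_4$-free graph and $T=(V,E_t)$ a spanning tree of $G$ such that for every edge $uv\in E$ and every $w\in P_T(u,v)$ we have $uw,vw\in E$. Let $\mathcal C$ be an induced chordless cycle $C_k$ in $G$ with $k\ge 4$, with vertices $c_1,\dots,c_k$. Then there is a vertex $w\notin\{c_1,\dots,c_k\}$ adjacent to all of $c_1,\dots,c_k$ (so $\mathcal C$ and $w$ form a wheel $W_k$), and no edge of $\mathcal C$ belongs to $E_t$.
   Context: All graphs are finite, simple, undirected and connected. For a tree $T$ and vertices $u,v$, $P_T(u,v)$ denotes the set of vertices on the path from $u$ to $v$ in $T$ excluding $u$ and $v$. A chordless cycle $C_k$ consists of vertices $v_1,\dots,v_k$ with edges exactly $v_iv_{i+1}$ (indices mod $k$) among them. A wheel $W_k$ is a $C_k$ plus a vertex adjacent to all its vertices. $K_4$-free means no clique on four vertices. *)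

(* Defs.v *)
From mathcomp Require Import all_boot.
Set Implicit Arguments. Unset Strict Implicit. Unset Printing Implicit Defensive.

Definition simple_graph (V : finType) (e : rel V) : Prop :=
  symmetric e /\ irreflexive e.

Definition connected_graph (V : finType) (e : rel V) : Prop :=
  forall u v : V, connect e u v.

Definition K4_free (V : finType) (e : rel V) : Prop :=
  ~ exists a b c d : V,
      [/\ e a b, e a c, e a d & [/\ e b c, e b d & e c d]].

Definition is_tree (V : finType) (t : rel V) : Prop :=
  simple_graph t /\ connected_graph t /\
  forall p : seq V, uniq p -> 3 <= size p -> ~~ cycle t p.

Definition spanning_tree (V : finType) (e t : rel V) : Prop :=
  is_tree t /\ subrel t e.

(* w \in P_T(u,v): w lies on the (unique) u-v path of the tree t, and w is not
   an endpoint.  The path u :: p is simple, goes from u to v. *)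
Definition on_tree_path (V : finType) (t : rel V) (u v w : V) : Prop :=
  exists p : seq V,
    [/\ path t u p, last u p = v, uniq (u :: p), w \in p & w != v].

Definition induced_cycle (V : finType) (e : rel V) (k : nat) (c : 'I_k -> V) : Prop :=
  injective c /\
  forall i j : 'I_k,
    e (c i) (c j) = ((i.+1 %% k == j :> nat) || (j.+1 %% k == i :> nat)).

(* Main.v *)
Require Import Defs.
From mathcomp Require Import all_boot.
From mathcomp Require Import zify.
Set Implicit Arguments. Unset Strict Implicit. Unset Printing Implicit Defensive.

Lemma detour (V : finType) (t : rel V) :
  (forall p : seq V, uniq p -> 3 <= size p -> ~~ cycle t p) ->
  forall x y z p, t x y -> t y z -> x != z -> path t z p -> last z p = x ->
  y \notin z :: p -> False.
Proof.
move=> Hac x y z p Hxy Hyz Hxz Hp Hl Hy.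
case: (shortenP Hp) Hl => p' Hp' Hu Hsub Hl.
have Hy' : y \notin z :: p'.
  move: Hy; rewrite !inE !negb_or => /andP[-> H2] /=.
  by apply/negP => /Hsub; apply/negP.
case: p' Hp' Hu Hsub Hl Hy' => [|a p'] Hp' Hu Hsub Hl Hy'.
  by move: Hxz; rewrite -Hl eqxx.
have Hu2 : uniq [:: y, z, a & p'] by rewrite cons_uniq Hy' Hu.
move/negP: (Hac _ Hu2 isT); apply.
rewrite /cycle /= Hyz /= rcons_path. by move: Hp' Hl => /= /andP[-> ->] /= ->.
Qed.

Section Walk.
Variables (V : finType) (t : rel V) (cc : nat -> V) (mm : nat -> option V).
Definition S j := match mm j with Some w => [:: w; cc j.+1] | None => [:: cc j.+1] end.
Hypothesis Hstep : forall j, match mm j with Some w => t (cc j) w && t w (cc j.+1)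
                                 | None => t (cc j) (cc j.+1) end.
Lemma walk_ok a n : path t (cc a) (flatten (map S (iota a n))) /\
   last (cc a) (flatten (map S (iota a n))) = cc (a + n).
Proof.
elim: n a => [|n IH] a /=; first by rewrite addn0.
have [H1 H2] := IH a.+1.
rewrite cat_path last_cat -addSnnS.
have : path t (cc a) (S a) /\ last (cc a) (S a) = cc a.+1.
  move: (Hstep a); rewrite /S; case: (mm a) => [w|] /=; last by rewrite andbT.
  by rewrite andbT.
by case=> -> ->.
Qed.
Lemma walk_avoid (y : V) a n : (forall j, a <= j < a + n -> all (predC1 y) (S j)) ->
  all (predC1 y) (flatten (map S (iota a n))).
Proof.
elim: n a => [|n IH] a H //=.
rewrite all_cat H ?leqnn ?addnS ?ltnS ?leq_addr //= IH // => j /andP[Hj1 Hj2].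
by apply: H; rewrite -addSnnS Hj2 andbT; apply: ltnW.
Qed.
End Walk.
Lemma key (V : finType) (t : rel V) (k : nat) (cc : nat -> V) (mm : nat -> option V) :
  (forall p : seq V, uniq p -> 3 <= size p -> ~~ cycle t p) ->
  3 <= k ->
  (forall j, match mm j with Some w => t (cc j) w && t w (cc j.+1)
                                 | None => t (cc j) (cc j.+1) end) ->
  cc k = cc 0 ->
  (forall j, 0 < j < k -> cc j != cc 0) ->
  (forall j, mm j != Some (cc 0)) ->
  odflt (cc k.-1) (mm k.-1) = odflt (cc 1) (mm 0).
Proof.
move=> Hac Hk Hstep Hper Hinj Hmm.
case: (odflt (cc k.-1) (mm k.-1) =P odflt (cc 1) (mm 0)) => // Hne; exfalso.
set p := flatten (map (S cc mm) (iota 1 (k - 2))) ++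
          (if mm k.-1 is Some w then [:: w] else [::]).
have [Hw1 Hw2] := walk_ok Hstep 1 (k - 2).
have Ek : 1 + (k - 2) = k.-1 by lia.
rewrite Ek in Hw2.
have Hpp : path t (cc 1) p /\ last (cc 1) p = odflt (cc k.-1) (mm k.-1).
  rewrite /p cat_path last_cat Hw1 Hw2 /=.
  move: (Hstep k.-1); case: (mm k.-1) => [w|] /=; last by [].
  by case/andP=> -> _.
have Hav : all (predC1 (cc 0)) p.
  rewrite /p all_cat walk_avoid.
    move: (Hmm k.-1); case: (mm k.-1) => [w|] //= Hw; rewrite andbT.
    by apply: contraNneq Hw => ->.
  move=> j /andP[Hj1 Hj2]; rewrite /S /=.
  have Hc : cc j.+1 != cc 0 by apply: Hinj; lia.
  move: (Hmm j); case: (mm j) => [w|] //= Hw; rewrite ?Hc ?andbT //.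
move: Hpp => [Hpp1 Hpp2].
have Hnp : cc 0 \notin p.
  by apply/negP => Hin; move/allP: Hav => /(_ _ Hin) /=; rewrite eqxx.
have Hc1 : cc 1 != cc 0 by apply: Hinj; lia.
have Hxy : t (odflt (cc k.-1) (mm k.-1)) (cc 0).
  move: (Hstep k.-1); rewrite prednK ?Hper; last lia.
  by case: (mm k.-1) => [w|] //= /andP[].
move: (Hstep 0) Hne (Hmm 0); case E0 : (mm 0) => [w|] /= Hs0 Hne Hw0.
- case/andP: Hs0 => Hyz Hz.
  apply: (@detour _ t Hac (odflt (cc k.-1) (mm k.-1)) (cc 0) w (cc 1 :: p)) => //.
  + by apply/eqP.
  + by rewrite /= Hz.
  + rewrite !in_cons !negb_or [cc 0 == cc 1]eq_sym Hc1 Hnp andbT /=.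
    by rewrite andbT; apply: contraNneq Hw0 => <-.
- apply: (@detour _ t Hac (odflt (cc k.-1) (mm k.-1)) (cc 0) (cc 1) p) => //.
  + by apply/eqP.
  + by rewrite in_cons negb_or eq_sym Hc1 Hnp.
Qed.
Lemma tree_step (V : finType) (e t : rel V) :
  simple_graph e -> K4_free e -> spanning_tree e t ->
  (forall u v w : V, e u v -> on_tree_path t u v w -> e u w /\ e v w) ->
  forall u v, e u v -> t u v \/ exists w, t u w && t w v.
Proof.
move=> [esym eirr] HK [[_ [Hcon _]] Hsub] Hpath u v Huv.
case/connectP: (Hcon u v) => p Hp Hl.
case: (shortenP Hp) Hl => p' Hp' Hu _ Hl.
case: p' Hp' Hu Hl => [|x1 [|x2 [|x3 r]]] Hp' Hu Hl.
- by move: Huv; rewrite Hl eirr.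
- by left; rewrite Hl; move: Hp' => /= /andP[].
- by right; exists x1; rewrite Hl; move: Hp' => /= /and3P[-> ->].
- exfalso; apply: HK.
  have Hlast : last x3 r \in x3 :: r := mem_last _ _.
  have Hl' : v = last x3 r by [].
  move: (Hu); rewrite cons_uniq => /andP[_]; rewrite cons_uniq => /andP[Hx1 Hu2].
  move: Hu2; rewrite cons_uniq => /andP[Hx2 _].
  have Hx1v : x1 != v.
    by apply: contraNneq Hx1 => ->; rewrite Hl' in_cons Hlast orbT.
  have Hx2v : x2 != v.
    by apply: contraNneq Hx2 => ->; rewrite Hl'.
  have Ht : on_tree_path t u v x1 /\ on_tree_path t u v x2.
    by split; exists [:: x1, x2, x3 & r]; split; rewrite // !in_cons eqxx ?orbT.
  have [H1 H2] := Hpath _ _ _ Huv Ht.1.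
  have [H3 H4] := Hpath _ _ _ Huv Ht.2.
  have H12 : e x1 x2 by apply: Hsub; move: Hp' => /= /and3P[].
  exists u, x1, x2, v; split => //; split => //; by rewrite esym.
Qed.
Lemma sm k x : x < k -> x.+1 %% k = if x.+1 == k then 0 else x.+1.
Proof. move=> H; case: eqP => [->|Hn]; first by rewrite modnn. by rewrite modn_small; lia. Qed.
Lemma arith3 k a b : 4 <= k -> a < k -> b < k -> (a.+1 %% k == b) || (b.+1 %% k == a) -> (b.+1 %% k == a.+1 %% k) || ((a.+1 %% k).+1 %% k == b) -> False.
Proof.
move=> Hk Ha Hb; rewrite (@sm k a Ha) (@sm k b Hb).
case: (a.+1 =P k) => [E|Ne].
  rewrite (@sm k 0) //; last by lia.
  have -> : (1 == k) = false by apply/eqP; lia.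
  by case: (b.+1 =P k) => Eb /orP[/eqP|/eqP] ? /orP[/eqP|/eqP] ?; lia.
have Ha1 : a.+1 < k by lia.
rewrite (@sm k _ Ha1).
by case: (b.+1 =P k) => Eb; case: (a.+2 =P k) => Ea /orP[/eqP|/eqP] ? /orP[/eqP|/eqP] ?; lia.
Qed.
Lemma succmod k a : (a %% k).+1 %% k = a.+1 %% k.
Proof. by rewrite -addn1 modnDml addn1. Qed.

Theorem lemma3 (V : finType) (e t : rel V) (k : nat) (c : 'I_k -> V) :
  simple_graph e -> connected_graph e -> K4_free e ->
  spanning_tree e t ->
  (forall u v w : V, e u v -> on_tree_path t u v w -> e u w /\ e v w) ->
  4 <= k -> induced_cycle e c ->
  (exists w : V, (forall i : 'I_k, w != c i) /\ (forall i : 'I_k, e w (c i)))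
  /\ (forall i j : 'I_k, e (c i) (c j) -> ~~ t (c i) (c j)).
Proof.
move=> Hsg Hcon HK Hst Hpath Hk [cinj Hind].
have [esym eirr] := Hsg.
have [[[tsym tirr] [_ Hac]] Hsub] := Hst.
have Hk0 : 0 < k by lia.
pose C n := c (Ordinal (ltn_pmod n Hk0)).
have Ceq : forall a b, a %% k = b %% k -> C a = C b.
  by move=> a b E; rewrite /C; congr c; apply: val_inj.
have Cinj : forall a b, C a = C b -> a %% k = b %% k.
  by move=> a b /cinj /(congr1 val).
have CE : forall i : 'I_k, c i = C i.
  by move=> i; rewrite /C; congr c; apply: val_inj; rewrite /= modn_small.
have Cadj : forall a b, e (C a) (C b) =
    ((a %% k).+1 %% k == b %% k) || ((b %% k).+1 %% k == a %% k).
  by move=> a b; rewrite Hind.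
have Cper : forall n, C (k + n) = C n by move=> n; apply: Ceq; rewrite modnDl.
pose mid n := [pick w | t (C n) w && t w (C n.+1)].
have F1 : forall n, match mid n with Some w => t (C n) w && t w (C n.+1)
                                 | None => t (C n) (C n.+1) end.
  move=> n; rewrite /mid; case: pickP => [w -> //|Hn].
  have He : e (C n) (C n.+1) by rewrite Cadj succmod eqxx.
  case: (tree_step Hsg HK Hst Hpath He) => // [[w Hw]].
  by have := Hn w; rewrite Hw.
have F3 : forall n m, mid n != Some (C m).
  move=> n m; apply/eqP => Hm; have := F1 n; rewrite Hm => /andP[H1 H2].
  have E1 := Hsub _ _ H1; have E2 := Hsub _ _ H2.
  rewrite Cadj in E1; rewrite Cadj -(succmod k n) in E2.
  exact: (@arith3 k (n %% k) (m %% k) Hk (ltn_pmod _ Hk0) (ltn_pmod _ Hk0) E1 E2).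
have F4 : forall n, odflt (C n) (mid n) = odflt (C n.+2) (mid n.+1).
  move=> n.
  have := @key V t k (fun j => C (j + n.+1)) (fun j => mid (j + n.+1)) Hac
    (leqW Hk).
  rewrite /= (_ : k.-1 + n.+1 = k + n); last by lia.
  rewrite !Cper (_ : mid (k + n) = mid n); last by rewrite /mid -addnS !Cper.
  rewrite !add0n add1n; apply.
  - by move=> j; rewrite addSn; move: (F1 (j + n.+1)); case: (mid _).
  - by [].
  - move=> j Hj; apply/negP => /eqP /Cinj /eqP.
    rewrite -{2}(add0n n.+1) eqn_modDr mod0n modn_small; lia.
  - by move=> j; apply: F3.
have F5 : forall n, exists w, mid n = Some w /\ mid n.+1 = Some w.
  move=> n; have := F4 n.
  case E1: (mid n) => [a|]; case E2: (mid n.+1) => [b|] /=.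
  - by move=> ->; exists b.
  - by move=> Ea; have := F3 n n.+2; rewrite E1 Ea eqxx.
  - by move=> Eb; have := F3 n.+1 n; rewrite E2 Eb eqxx.
  - move/Cinj/eqP; rewrite -[n in n %% k]addn0 -[n.+2]addn2 eqn_modDl.
    by rewrite mod0n modn_small //; lia.
have F6 : forall n, mid n = mid 0.
  elim=> [//|n IH]; rewrite -IH; by have [w [-> ->]] := F5 n.
have [w0 [E0 _]] := F5 0.
have Hall : forall n, mid n = Some w0 by move=> n; rewrite F6.
have Hnt : forall n, ~~ t (C n) (C n.+1).
  move=> n; apply/negP => Ht; have := F1 n; rewrite Hall => /andP[H1 H2].
  have Hu : uniq [:: C n; w0; C n.+1].
    rewrite /= !inE !negb_or andbT.
    have := F3 n n; rewrite Hall => Ha.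
    have := F3 n n.+1; rewrite Hall => Hb.
    have Hc : C n != C n.+1 by apply: contraTneq Ht => ->; rewrite tirr.
    rewrite Hc /= andbT; apply/andP; split.
      by apply: contraNneq Ha => <-.
    by apply: contraNneq Hb => ->.
  have := Hac _ Hu isT; by rewrite /= H1 H2 tsym Ht.
split.
  exists w0; split => i; rewrite CE.
    by have := F3 i i; rewrite Hall; apply: contraNneq => ->.
  by have := F1 i; rewrite Hall => /andP[H1 _]; rewrite esym; apply: Hsub.
move=> i j; rewrite Hind => /orP[/eqP Hij|/eqP Hji].
  have -> : c j = C i.+1 by rewrite (CE j); apply: Ceq; rewrite (modn_small (ltn_ord j)).
  by rewrite CE; apply: Hnt.
have -> : c i = C j.+1 by rewrite (CE i); apply: Ceq; rewrite (modn_small (ltn_ord i)).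
by rewrite tsym CE; apply: Hnt.
Qed.
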